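(* Let $X$ be a topological space and $x \in X$, and suppose player II has a winning strategy $F$ in the game $\mathsf{G}_1(\Omega_x, \Omega_x)$. Let $\mathcal{P}$ be a family such that each element of $\mathcal{P}$ is a centered family of countable subsets of $X$, and such that for every neighborhood $O_x$ of $x$ there exist $\mathcal{B} \in \mathcal{P}$ and $B \in \mathcal{B}$ with $B \subset O_x$. Then there is a family $(\mathcal{B}_s)_{s \in \omega^{<\omega}}$ of elements of $\mathcal{P}$ such that for every choice of $B_s \in \mathcal{B}_s$ for each $s \in \omega^{<\omega}$, and for every $f \in \omega^\omega$, we have $x \in \overline{\bigcup_{s \subset f} B_s}$ (the union over all finite initial segments $s$ of $f$).
   Context: For a point $x$ of a space $X$, $\Omega_x$ denotes the collection of all sets $A \subset X$ such that $x \notin A$ and $x \in \overline{A}$. The game $\mathsf{G}_1(\Omega_x,\Omega_x)$ is played in innings $n \in \omega$: in inning $n$ player I chooses $A_n \in \Omega_x$ and then player II chooses $a_n \in A_n$; player II wins if $\{a_n : n \in \omega\} \in \Omega_x$. A strategy for player II is a function $F$ assigning to each finite nonempty sequence $(D_0,\dots,D_n)$ of elements of $\Omega_x$ a point $F(D_0,\dots,D_n) \in D_n$; it is winning if II wins every play in which she answers according to $F$. A family $\mathcal{F}$ of sets is centered if $A \cap B \neq \emptyset$ for all $A, B \in \mathcal{F}$. *)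

(* Defs.v *)
From mathcomp Require Import all_boot all_order.
From mathcomp Require Import all_classical.
From mathcomp Require Import topology.
Set Implicit Arguments. Unset Strict Implicit. Unset Printing Implicit Defensive.
Local Open Scope classical_set_scope.

Definition Omega_x {X : topologicalType} (x : X) : set (set X) :=
  [set A | ~ A x /\ closure A x].

(* A strategy for player II: assigns to every finite nonempty sequence
   (D_0,...,D_n) of elements of Omega_x (encoded as rcons s D) a point of D_n.
   Values on sequences not consisting of elements of Omega_x are irrelevant. *)
Definition strategy_II {X : topologicalType} (x : X) (F : seq (set X) -> X) : Prop :=
  forall (s : seq (set X)) (D : set X),
    (forall i, (i < size s)%N -> Omega_x x (nth set0 s i)) ->
    Omega_x x D -> D (F (rcons s D)).

Definition winning_strategy_II {X : topologicalType} (x : X) (F : seq (set X) -> X) : Prop :=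
  strategy_II x F /\
  forall A : nat -> set X, (forall n, Omega_x x (A n)) ->
    Omega_x x (range (fun n => F (mkseq A n.+1))).

Definition centered {X : Type} (FF : set (set X)) : Prop :=
  forall A B, FF A -> FF B -> A `&` B !=set0.

(* Main.v *)
Require Import Defs.
From mathcomp Require Import all_boot all_order.
From mathcomp Require Import all_classical.
From mathcomp Require Import topology.
Local Open Scope classical_set_scope.

Lemma choiceP {X Y} (P : X -> Y -> Prop) :
  (forall x, exists y, P x y) -> exists f, forall x, P x (f x).
Proof. by move=> /choice [f hf]; exists f. Qed.

Lemma enumP {X : Type} {B : set X} {b0 : X} : countable B -> B b0 ->
  exists e : nat -> X, (forall k, B (e k)) /\ (forall y, B y -> exists k, e k = y).
Proof.
move=> /countable_injP [h hinj] Bb0.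
have [e he] : exists e : nat -> X, forall k,
    B (e k) /\ ((exists y, B y /\ h y = k) -> h (e k) = k).
  apply: (choiceP (fun k y => B y /\ ((exists y, B y /\ h y = k) -> h y = k))) => k.
  case: (pselect (exists y, B y /\ h y = k)) => [[y [By hy]]|hn].
    by exists y; split.
  by exists b0; split => // hc; exfalso; apply: hn.
exists e; split => [k|y By]; first exact: (he k).1.
exists (h y); apply: hinj; rewrite ?inE //; first exact: (he _).1.
by apply: (he _).2; exists y.
Qed.

Lemma nbhd_claim {X : topologicalType} {x : X} {F : seq (set X) -> X} p :
  strategy_II x F -> exists U, nbhs x U /\
  ((forall i, (i < size p)%N -> Omega_x x (nth set0 p i)) ->
   forall y, U y -> y <> x -> exists A, Omega_x x A /\ F (rcons p A) = y).
Proof.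
move=> hF.
case: (pselect (forall i, (i < size p)%N -> Omega_x x (nth set0 p i))) => hv; last first.
  by exists setT; split; [exact: filterT | move=> /hv].
apply: contrapT => hn.
pose A := [set y | y <> x /\ ~ exists A, Omega_x x A /\ F (rcons p A) = y].
have OA : Omega_x x A.
  split; first by case.
  move=> B nB; apply: contrapT => hAB; apply: hn; exists B; split => // _ y By yx.
  apply: contrapT => hy; apply: hAB; exists y; split => //.
have := hF p A hv OA; case=> _; apply.
by exists A.
Qed.

Theorem theorem2p2 (X : topologicalType) (x : X) (F : seq (set X) -> X)
  (P : set (set (set X))) :
  winning_strategy_II x F ->
  (forall BB, P BB -> centered BB /\ (forall B, BB B -> countable B)) ->
  (forall O, nbhs x O -> exists BB, P BB /\ exists B, BB B /\ B `<=` O) ->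
  exists Bs : seq nat -> set (set X),
    (forall s, P (Bs s)) /\
    forall Bsel : seq nat -> set X, (forall s, Bs s (Bsel s)) ->
    forall f : nat -> nat,
      closure (\bigcup_(n in [set: nat]) Bsel (mkseq f n)) x.
Proof.
move=> [hF hW] hP hN.
have [U hU] := choiceP (fun p U => nbhs x U /\
  ((forall i, (i < size p)%N -> Omega_x x (nth set0 p i)) ->
   forall y, U y -> y <> x -> exists A, Omega_x x A /\ F (rcons p A) = y))
  (fun p => nbhd_claim p hF).
have [G hG] : exists G : set X -> set (set X) * set X, forall O, nbhs x O ->
    P (G O).1 /\ (G O).1 (G O).2 /\ (G O).2 `<=` O.
  apply: (choiceP (fun O (pr : set (set X) * set X) => nbhs x O ->
    P pr.1 /\ pr.1 pr.2 /\ pr.2 `<=` O)) => O.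
  case: (pselect (nbhs x O)) => hO; last by exists (set0, set0).
  have [BB [PBB [B [BBB BO]]]] := hN O hO.
  by exists (BB, B).
have [E hE] : exists E : set X -> nat -> X, forall B, countable B -> B !=set0 ->
    (forall k, B (E B k)) /\ (forall y, B y -> exists k, E B k = y).
  apply: (choiceP (fun B (e : nat -> X) => countable B -> B !=set0 ->
    (forall k, B (e k)) /\ (forall y, B y -> exists k, e k = y))) => B.
  case: (pselect (countable B /\ B !=set0)) => [[cB [b Bb]]|hn].
    by have [e he] := enumP cB Bb; exists e.
  by exists (fun _ => x) => cB nB; exfalso; apply: hn.
have [Ach hA] := choiceP (fun (pk : seq (set X) * nat) A' =>
    (exists A, Omega_x x A /\ F (rcons pk.1 A) = E (G (U pk.1)).2 pk.2) ->
    Omega_x x A' /\ F (rcons pk.1 A') = E (G (U pk.1)).2 pk.2)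
  (fun pk => match pselect (exists A, Omega_x x A /\
       F (rcons pk.1 A) = E (G (U pk.1)).2 pk.2) with
   | left h => let: exist A hA := cid h in ex_intro _ A (fun _ => hA)
   | right h => ex_intro _ set0 (fun h' => False_ind _ (h h'))
   end).
pose pos (u : seq nat) := foldl (fun p k => rcons p (Ach (p, k))) [::] u.
pose BBof u := (G (U (pos u))).1.
pose Wof u := (G (U (pos u))).2.
have hGu u := hG _ (hU (pos u)).1.
exists (fun s => BBof (odflt [::] (unpickle (size s)))).
split; first by move=> s; exact: (hGu _).1.
move=> Bsel hsel f.
pose S n := Bsel (mkseq f n).
have hS u : BBof u (S (pickle u)).
  by have := hsel (mkseq f (pickle u)); rewrite size_mkseq pickleK.
have hWc u : countable (Wof u) /\ Wof u !=set0.
  have [cen cnt] := hP _ (hGu u).1.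
  split; first exact: cnt (hGu u).2.1.
  by have [y [y1 _]] := cen _ _ (hGu u).2.1 (hGu u).2.1; exists y.
have key u : exists k, S (pickle u) (E (Wof u) k).
  have [cen _] := hP _ (hGu u).1.
  have [y [Sy Wy]] := cen _ _ (hS u) (hGu u).2.1.
  have [cW nW] := hWc u.
  have [k hk] := (hE _ cW nW).2 y Wy.
  by exists k; rewrite hk.
have [kk hkk] := choiceP _ key.
pose gs m := iter m (fun u => rcons u (kk u)) [::].
pose c m := E (Wof (gs m)) (kk (gs m)).
case: (pselect (exists m, c m = x)).
  case=> m hm; apply: subset_closure.
  by exists (pickle (gs m)) => //; rewrite -hm; exact: hkk.
move=> hnx.
pose A m := Ach (pos (gs m), kk (gs m)).
have hpos m : pos (gs m) = mkseq A m.
  elim: m => [//|m IH].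
  rewrite mkseqS -IH /pos /= foldl_rcons //.
have hall : forall m i, (i < m)%N ->
    Omega_x x (A i) /\ F (rcons (pos (gs i)) (A i)) = c i.
  elim=> [//|m IH] i; rewrite ltnS leq_eqVlt => /orP [/eqP ->|]; last exact: IH.
  apply: hA.
  have hv : forall i, (i < size (pos (gs m)))%N -> Omega_x x (nth set0 (pos (gs m)) i).
    by rewrite hpos size_mkseq => j hj; rewrite nth_mkseq //; exact: (IH j hj).1.
  have [cW nW] := hWc (gs m).
  have := (hU (pos (gs m))).2 hv (c m).
  apply.
    exact: (hGu (gs m)).2.2 _ ((hE _ cW nW).1 _).
  by move=> hx; apply: hnx; exists m.
have hOm m : Omega_x x (A m) by exact: (hall m.+1 m (ltnSn m)).1.
have := (hW A hOm).2; apply: closure_subset.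
move=> _ [n _ <-]; exists (pickle (gs n)) => //.
rewrite mkseqS -hpos (hall n.+1 n (ltnSn n)).2.
exact: hkk.
Qed.
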